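(* Let $\phi\cong\bigoplus_{i\in\mathcal I}\phi_i^{\oplus m_i}$ be a semisimple finite-dimensional complex representation of a compact Lie algebra $\mathfrak{g}$, with pairwise inequivalent irreducible $\phi_i$ and multiplicities $m_i$, and let $\mathfrak{h}$ be a Lie subalgebra of $\mathfrak{g}$. Write $\phi|_{\mathfrak{h}}\cong\bigoplus_{j\in\mathcal J}\psi_j^{\oplus n_j}$ and $\phi_i|_{\mathfrak{h}}\cong\bigoplus_{j\in\mathcal J}\psi_j^{\oplus n_{ji}}$ with pairwise inequivalent irreducible representations $\psi_j$ of $\mathfrak{h}$, so that $n_j=\sum_i n_{ji}m_i$. Then: (a) $\|\phi_i|_{\mathfrak{h}}\|_1=1$ for all $i$ with $m_i\ne0$ if and only if $\|\phi|_{\mathfrak{h}}\|_1=\|\phi\|_1$; (b) $\|\phi|_{\mathfrak{h}}\|_2=\|\phi\|_2$ implies $\|\phi|_{\mathfrak{h}}\|_1=\|\phi\|_1$; (c) $\|\phi|_{\mathfrak{h}}\|_2=\|\phi\|_2$ holds if and only if $\|\phi|_{\mathfrak{h}}\|_1=\|\phi\|_1$ and $\phi_i|_{\mathfrak{h}}\not\cong\phi_k|_{\mathfrak{h}}$ for all $i\ne k$ with $m_i\ne0$ and $m_k\ne0$.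
   Context: For a semisimple representation $\psi\cong\bigoplus_i\psi_i^{\oplus m_i}$ (pairwise inequivalent irreducible $\psi_i$), $\|\psi\|_1=\sum_i m_i$ and $\|\psi\|_2=\sum_i m_i^2$. Restrictions of semisimple representations of compact Lie algebras to subalgebras are semisimple. *)

(* Defs.v *)
From HB Require Import structures.
From mathcomp Require Import all_boot all_order all_algebra.
From mathcomp Require Import complex.
From mathcomp Require Import reals.
Set Implicit Arguments. Unset Strict Implicit. Unset Printing Implicit Defensive.
Import Order.TTheory GRing.Theory Num.Theory.
Local Open Scope ring_scope.

Section LieDefs.
Variable R : realType.
Local Notation C := (complex R).

Definition is_lie_bracket (V : vectType R) (br : V -> V -> V) : Prop :=
  [/\ (forall a x y z, br (a *: x + y) z = a *: br x z + br y z),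
      (forall a x y z, br z (a *: x + y) = a *: br z x + br z y),
      (forall x, br x x = 0) &
      (forall x y z, br x (br y z) + br y (br z x) + br z (br x y) = 0)].

(* Compact Lie algebra: admits an ad-invariant inner product
   (equivalently, it is the Lie algebra of a compact Lie group). *)
Definition compact_lie (V : vectType R) (br : V -> V -> V) : Prop :=
  is_lie_bracket br /\
  exists B : V -> V -> R,
    [/\ (forall a x y z, B (a *: x + y) z = a * B x z + B y z),
        (forall x y, B x y = B y x),
        (forall x, x != 0 -> 0 < B x x) &
        (forall x y z, B (br x y) z = - B y (br x z))].

Definition lie_subalg (V : vectType R) (br : V -> V -> V) (h : {vspace V}) : Prop :=
  forall x y, x \in h -> y \in h -> br x y \in h.

(* A finite-dimensional complex representation (acting on row vectors). *)
Record rep (V : vectType R) := Rep { rdim : nat; rmap : V -> 'M[C]_rdim }.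

Definition is_rep_on (V : vectType R) (br : V -> V -> V) (S : pred V) (f : rep V) : Prop :=
  [/\ (forall a x y, x \in S -> y \in S ->
          rmap f (a *: x + y) = (a%:C)%C *: rmap f x + rmap f y) &
      (forall x y, x \in S -> y \in S ->
          rmap f (br x y) = rmap f x *m rmap f y - rmap f y *m rmap f x)].

Definition equiv_on (V : vectType R) (S : pred V) (f g : rep V) : Prop :=
  rdim f = rdim g /\
  exists P : 'M[C]_(rdim f, rdim g),
    [/\ row_free P, row_full P &
        forall x, x \in S -> rmap f x *m P = P *m rmap g x].

Definition irr_on (V : vectType R) (S : pred V) (f : rep V) : Prop :=
  (0 < rdim f)%N /\
  forall U : 'M[C]_(rdim f),
    (forall x, x \in S -> stablemx U (rmap f x)) ->
    U = 0 \/ row_full U.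

Definition rep0 (V : vectType R) : rep V := @Rep V 0 (fun _ => 0).
Definition rep_add (V : vectType R) (f g : rep V) : rep V :=
  @Rep V (rdim f + rdim g) (fun x => block_mx (rmap f x) 0 0 (rmap g x)).
Definition rep_sum (V : vectType R) (s : seq (rep V)) : rep V :=
  foldr (@rep_add V) (rep0 V) s.
Definition rep_msum (V : vectType R) (I : finType) (f : I -> rep V) (m : I -> nat)
  : rep V := rep_sum (flatten [seq nseq (m i) (f i) | i <- enum I]).

End LieDefs.

(* ||psi||_1 and ||psi||_2 for a decomposition with multiplicities m. *)
Definition norm1 (I : finType) (m : I -> nat) : nat := (\sum_(i : I) m i)%N.
Definition norm2 (I : finType) (m : I -> nat) : nat := (\sum_(i : I) m i ^ 2)%N.

(* Main.v *)
Require Import Defs.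
From HB Require Import structures.
From mathcomp Require Import all_boot all_order all_algebra.
From mathcomp Require Import complex.
From mathcomp Require Import reals.
From mathcomp Require Import zify ring.
Set Implicit Arguments. Unset Strict Implicit. Unset Printing Implicit Defensive.
Import Order.TTheory GRing.Theory Num.Theory.

Section Arith.
Lemma sum_eq_ge (I : finType) (f g : I -> nat) :
  (forall i, f i <= g i) -> \sum_i f i = \sum_i g i -> forall i, f i = g i.
Proof.
move=> Hle Hs i; apply/eqP; rewrite eqn_leq Hle /=.
rewrite leqNgt; apply/negP => Hlt.
move: Hs; rewrite (bigD1 i) //= [in RHS](bigD1 i) //=.
have : \sum_(j | j != i) f j <= \sum_(j | j != i) g j by apply: leq_sum.
lia.
Qed.

Lemma col_unit (J : finType) (f : J -> nat) :
  \sum_l f l = 1 -> exists j, forall l, f l = (l == j).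
Proof.
move=> Hs; case: (pickP (fun l => 0 < f l)) => [j Hj | H0]; last first.
  move: Hs; rewrite big1 // => l _; move: (H0 l) => /=; lia.
exists j.
move: Hs; rewrite (bigD1 j) //= => Hs.
have Hr : \sum_(l | l != j) f l = 0 by lia.
have Hfj : f j = 1 by lia.
move/eqP: Hr; rewrite sum_nat_eq0 => /forallP Hr l.
case: (eqVneq l j) => [-> // | Hne].
by move: (Hr l); rewrite Hne /= => /eqP.
Qed.
End Arith.
Local Open Scope ring_scope.
Section Reps.
Variables (R : realType) (V : vectType R).

Lemma equiv_sym (S : pred V) (f g : rep V) : equiv_on S f g -> equiv_on S g f.
Proof.
case=> e [P [fr fu H]]; split; first by [].
case/row_freeP: fr => K PK; case/row_fullP: fu => B BP.
have BK : B = K by rewrite -[B]mulmx1 -PK mulmxA BP mul1mx.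
subst B.
exists K; split; first by apply/row_freeP; exists P.
  by apply/row_fullP; exists P.
move=> x Sx.
have E : K *m rmap f x *m (P *m K) = K *m rmap f x by rewrite PK mulmx1.
by rewrite -E mulmxA -(mulmxA K (rmap f x) P) H // mulmxA BP mul1mx.
Qed.

Lemma equiv_trans (S : pred V) (f g k : rep V) :
  equiv_on S f g -> equiv_on S g k -> equiv_on S f k.
Proof.
case=> e1 [P [fr1 fu1 H1]]; case=> e2 [Q [fr2 fu2 H2]]; split; first by rewrite e1.
case/row_freeP: fr1 => K1 PK1; case/row_fullP: fu1 => B1 BP1.
case/row_freeP: fr2 => K2 PK2; case/row_fullP: fu2 => B2 BP2.
exists (P *m Q); split.
- by apply/row_freeP; exists (K2 *m K1); rewrite mulmxA -(mulmxA P) PK2 mulmx1 PK1.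
- by apply/row_fullP; exists (B2 *m B1); rewrite mulmxA -(mulmxA B2) BP1 mulmx1 BP2.
- by move=> x Sx; rewrite mulmxA H1 // -mulmxA H2 // mulmxA.
Qed.

Lemma equiv_add0 (S : pred V) (f : rep V) : equiv_on S f (rep_add f (rep0 V)).
Proof.
split; first by rewrite /= addn0.
exists (row_mx 1%:M 0); split.
- apply/row_freeP; exists (col_mx 1%:M 0).
  by rewrite mul_row_col mulmx1 mulmx0 addr0.
- apply/row_fullP; exists (col_mx 1%:M 0).
  rewrite mul_col_row mulmx1 mul0mx [RHS]scalar_mx_block ?mulmx0.
  by congr block_mx; apply/matrixP => [[]].
- move=> x Sx /=.
  by rewrite mul_mx_row mulmx1 ?mulmx0 mul_row_block ?mul1mx ?mul0mx ?mulmx0 ?addr0 ?add0r.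
Qed.

Lemma msum_filter (J : finType) (psis : J -> rep V) (f : J -> nat) j s :
  (forall l, f l = (l == j)) ->
  flatten [seq nseq (f l) (psis l) | l <- s] = [seq psis l | l <- filter (pred1 j) s].
Proof.
move=> Hf; elim: s => //= l s IH; rewrite Hf IH.
by case: (l == j).
Qed.

Lemma msum_single (J : finType) (psis : J -> rep V) (f : J -> nat) j :
  (forall l, f l = (l == j)) -> rep_msum psis f = rep_add (psis j) (rep0 V).
Proof.
move=> Hf; rewrite /rep_msum (@msum_filter J psis f j _ Hf).
by rewrite filter_pred1_uniq ?enum_uniq ?mem_enum.
Qed.

Lemma msum_zero (J : finType) (psis : J -> rep V) (f : J -> nat) :
  (forall l, f l = 0%N) -> rep_msum psis f = rep0 V.
Proof.
move=> Hf; rewrite /rep_msum; elim: (enum J) => //= l s.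
by rewrite Hf.
Qed.

End Reps.
Local Close Scope ring_scope.

Lemma norm2_expand (I J : finType) (n : J -> nat) (m : I -> nat) (nn : J -> I -> nat) :
  (forall j, n j = \sum_(i : I) nn j i * m i) ->
  norm2 n = \sum_i \sum_k m i * m k * (\sum_j nn j i * nn j k).
Proof.
move=> Hn; rewrite /norm2.
under eq_bigr => j _ do rewrite Hn -mulnn big_distrl /=.
under eq_bigr => j _ do under eq_bigr => i _ do rewrite big_distrr /=.
rewrite exchange_big /=; apply: eq_bigr => i _.
rewrite exchange_big /=; apply: eq_bigr => k _.
rewrite big_distrr /=; apply: eq_bigr => j _; ring.
Qed.

Lemma split_diag (I : finType) (g : I -> I -> nat) :
  \sum_i \sum_k g i k = \sum_i g i i + \sum_i \sum_(k | k != i) g i k.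
Proof.
rewrite -big_split /=; apply: eq_bigr => i _; by rewrite (bigD1 i).
Qed.

Theorem proposition2
  (R : realType) (V : vectType R) (br : V -> V -> V)
  (Hg : compact_lie br)
  (h : {vspace V}) (Hh : lie_subalg br h)
  (* the representation phi of g and its decomposition *)
  (phi : rep V) (Hphi : is_rep_on br predT phi)
  (I : finType) (phis : I -> rep V) (m : I -> nat)
  (Hphis : forall i, is_rep_on br predT (phis i))
  (Hirr : forall i, irr_on predT (phis i))
  (Hineq : forall i k, i != k -> ~ equiv_on predT (phis i) (phis k))
  (Hdec : equiv_on predT phi (rep_msum phis m))
  (* the decompositions of the restrictions to h *)
  (J : finType) (psis : J -> rep V) (n : J -> nat) (nn : J -> I -> nat)
  (Hpsis : forall j, is_rep_on br (mem h) (psis j))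
  (Hirr_h : forall j, irr_on (mem h) (psis j))
  (Hineq_h : forall j l, j != l -> ~ equiv_on (mem h) (psis j) (psis l))
  (Hdec_h : equiv_on (mem h) phi (rep_msum psis n))
  (Hdec_hi : forall i, equiv_on (mem h) (phis i) (rep_msum psis (nn ^~ i)))
  (Hn : forall j, n j = (\sum_(i : I) nn j i * m i)%N) :
  [/\ (forall i, m i != 0%N -> norm1 (nn ^~ i) = 1%N) <-> norm1 n = norm1 m,
      norm2 n = norm2 m -> norm1 n = norm1 m &
      norm2 n = norm2 m <->
        (norm1 n = norm1 m /\
         forall i k, i != k -> m i != 0%N -> m k != 0%N ->
           ~ equiv_on (mem h) (phis i) (phis k))].
Proof.
pose c i := \sum_j nn j i.
pose E i k := \sum_j nn j i * nn j k.
have Hc : forall i, 0 < c i.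
  move=> i; rewrite lt0n; apply/negP => /eqP H0.
  have Z : forall l, nn l i = 0.
    move=> l; move/eqP: H0; rewrite sum_nat_eq0 => /forallP/(_ l) /=.
    by move/eqP.
  case: (Hirr i) => Hd _; case: (Hdec_hi i) => Hdim _.
  by move: Hd; rewrite Hdim (msum_zero psis Z).
have N1 : norm1 n = \sum_i m i * c i.
  rewrite /norm1 (eq_bigr _ (fun j _ => Hn j)) exchange_big /=.
  by apply: eq_bigr => i _; rewrite -big_distrl /= mulnC.
have HEc : forall i, c i <= E i i.
  move=> i; apply: leq_sum => j _; nia.
have Ha : (forall i, m i != 0%N -> c i = 1%N) <-> norm1 n = norm1 m.
  split.
    move=> H; rewrite N1 /norm1; apply: eq_bigr => i _.
    case: (eqVneq (m i) 0) => [-> // | /H ->]; by rewrite muln1.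
  move=> Heq i Hmi.
  have T := @sum_eq_ge I m (fun i => m i * c i) (fun i => leq_pmulr _ (Hc i)).
  rewrite -N1 Heq in T; have := T erefl i; move: Hmi (Hc i) => /eqP Hmi Hci Hmc.
  apply/eqP; rewrite -(eqn_pmul2l (m := m i)) ?muln1; [by apply/eqP | lia].
have N2 : norm2 n = \sum_i m i * m i * E i i + \sum_i \sum_(k | k != i) m i * m k * E i k.
  by rewrite (norm2_expand Hn) split_diag.
have Nm : norm2 m = \sum_i m i * m i * 1.
  by rewrite /norm2; apply: eq_bigr => i _; rewrite muln1 mulnn.
have Hkey : norm2 n = norm2 m ->
  (forall i, m i != 0%N -> c i = 1%N) /\
  \sum_i \sum_(k | k != i) m i * m k * E i k = 0.
  move=> Heq.
  have Hle : \sum_i m i * m i * 1 <= \sum_i m i * m i * E i i.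
    apply: leq_sum => i _; apply: leq_mul => //; exact: leq_trans (Hc i) (HEc i).
  have HD : \sum_i m i * m i * 1 = \sum_i m i * m i * E i i by move: N2; rewrite Heq Nm; lia.
  split; last by move: N2 HD; rewrite Heq Nm; lia.
  move=> i Hmi.
  have T := @sum_eq_ge I (fun i => m i * m i * 1) (fun i => m i * m i * E i i).
  have := T (fun i => leq_mul (leqnn _) (leq_trans (Hc i) (HEc i))) HD i.
  move: (Hc i) (HEc i) Hmi; nia.
have Hunit : forall i, c i = 1 -> exists j, forall l, nn l i = (l == j).
  by move=> i; apply: col_unit.
have Eunit : forall i k j j', (forall l, nn l i = (l == j)) -> (forall l, nn l k = (l == j')) ->
    E i k = (j == j').
  move=> i k j j' Hi Hk; rewrite /E (bigD1 j) //= big1 ?addn0.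
    by rewrite Hi Hk eqxx mul1n.
  move=> l /negbTE Hl; rewrite Hi Hl //.
have Hsingle : forall i j, (forall l, nn l i = (l == j)) ->
    equiv_on (mem h) (phis i) (psis j).
  move=> i j Hi; have := Hdec_hi i; rewrite (msum_single psis Hi) => H.
  exact: equiv_trans H (equiv_sym (equiv_add0 _ _)).
split => //.
- by move=> /Hkey [H _]; apply/Ha.
split.
- move=> Heq; case: (Hkey Heq) => Hc1 HO; split; first by apply/Ha.
  move=> i k Hik Hmi Hmk Heqv.
  case: (Hunit i (Hc1 i Hmi)) => j Hj; case: (Hunit k (Hc1 k Hmk)) => j' Hj'.
  have Hjj : j = j'.
    apply/eqP; apply/negPn/negP => Hne; apply: (Hineq_h _ _ Hne).
    exact: equiv_trans (equiv_sym (Hsingle _ _ Hj)) (equiv_trans Heqv (Hsingle _ _ Hj')).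
  move/eqP: HO; rewrite sum_nat_eq0 => /forallP/(_ i) /=; rewrite sum_nat_eq0.
  move=> /forallP/(_ k) /=; rewrite eq_sym Hik /= (Eunit _ _ _ _ Hj Hj') Hjj eqxx.
  move: Hmi Hmk; nia.
- case=> /Ha Hc1 Hne; rewrite N2 Nm.
  rewrite [X in _ + X]big1 ?addn0; last first.
    move=> i _; apply: big1 => k Hki.
    case: (eqVneq (m i) 0) => [-> // | Hmi]; case: (eqVneq (m k) 0) => [-> | Hmk]; first by rewrite muln0.
    case: (Hunit i (Hc1 i Hmi)) => j Hj; case: (Hunit k (Hc1 k Hmk)) => j' Hj'.
    rewrite (Eunit _ _ _ _ Hj Hj'); case: (eqVneq j j') => [Hjj | _]; last by rewrite muln0.
    exfalso; apply: (Hne i k) => //; first by rewrite eq_sym.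
    have Ecol : rep_msum psis (nn ^~ i) = rep_msum psis (nn ^~ k).
      by rewrite (msum_single psis Hj) (msum_single psis Hj') Hjj.
    exact: equiv_trans (Hdec_hi i) (equiv_sym (eq_ind _ (fun r => equiv_on (mem h) (phis k) r) (Hdec_hi k) _ (esym Ecol))).
  apply: eq_bigr => i _.
  case: (eqVneq (m i) 0) => [-> // | Hmi].
  case: (Hunit i (Hc1 i Hmi)) => j Hj; by rewrite (Eunit _ _ _ _ Hj Hj) eqxx.
Qed.
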